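(* Consider a unifilar state channel with state update $z_i=f_{\mathsf z}(z_{i-1},y_i,x_i)$ and output $y_i=f_{\mathsf y}(z_{i-1},x_i,k_i)$, where $f_{\mathsf y}$ and $f_{\mathsf z}$ are Lipschitz with respect to the $\ell^1$ norm with constants $M_y$ and $M_z$ respectively, satisfying $M_z(M_y+1)<1$. Let $n\in\mathbb N$ and let $x^{1,n},x^{2,n}$ be two input sequences with $\max_{t=1,\dots,n}\|x^1_t-x^2_t\|_1\le\eta$, and let $y^{1,n},y^{2,n}$ be the corresponding outputs, generated with the same noise realization $k^n$ and the same initial state. Then $$\max_{t=1,\dots,n}\|y^1_t-y^2_t\|_1\le\frac{M_y\big(2-M_z(M_y+1)\big)}{1-M_z(M_y+1)}\,\eta.$$ *)

(* Defs.v *)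
From HB Require Import structures.
From mathcomp Require Import all_boot all_order all_algebra.
Set Implicit Arguments. Unset Strict Implicit. Unset Printing Implicit Defensive.
Import Order.TTheory GRing.Theory Num.Theory.
Local Open Scope ring_scope.

Definition norm1 {R : numDomainType} {d : nat} (v : 'rV[R]_d) : R :=
  \sum_(i < d) `|v 0 i|.

(* Lipschitz w.r.t. the ell^1 norm on the product space R^a x R^b x R^c
   (the ell^1 norm of the concatenated vector is the sum of the ell^1 norms). *)
Definition lipschitz3 {R : numDomainType} {a b c e : nat}
  (f : 'rV[R]_a -> 'rV[R]_b -> 'rV[R]_c -> 'rV[R]_e) (M : R) : Prop :=
  forall u u' v v' w w',
    norm1 (f u v w - f u' v' w') <= M * (norm1 (u - u') + norm1 (v - v') + norm1 (w - w')).

(* Unifilar state channel: state z_i = fz (z_{i-1}) (y_i) (x_i),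
   output y_i = fy (z_{i-1}) (x_i) (k_i); time indices start at 1, z_0 = initial state. *)
Fixpoint chan_state {R : numDomainType} {dz dy dx dk : nat}
  (fy : 'rV[R]_dz -> 'rV[R]_dx -> 'rV[R]_dk -> 'rV[R]_dy)
  (fz : 'rV[R]_dz -> 'rV[R]_dy -> 'rV[R]_dx -> 'rV[R]_dz)
  (z0 : 'rV[R]_dz) (x : nat -> 'rV[R]_dx) (k : nat -> 'rV[R]_dk) (i : nat) : 'rV[R]_dz :=
  match i with
  | 0 => z0
  | j.+1 => let zj := chan_state fy fz z0 x k j in
            fz zj (fy zj (x j.+1) (k j.+1)) (x j.+1)
  end.

Definition chan_out {R : numDomainType} {dz dy dx dk : nat}
  (fy : 'rV[R]_dz -> 'rV[R]_dx -> 'rV[R]_dk -> 'rV[R]_dy)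
  (fz : 'rV[R]_dz -> 'rV[R]_dy -> 'rV[R]_dx -> 'rV[R]_dz)
  (z0 : 'rV[R]_dz) (x : nat -> 'rV[R]_dx) (k : nat -> 'rV[R]_dk) (i : nat) : 'rV[R]_dy :=
  fy (chan_state fy fz z0 x k i.-1) (x i) (k i).

(* Main.v *)
Require Import Defs.
From HB Require Import structures.
From mathcomp Require Import all_boot all_order all_algebra.
From mathcomp Require Import ring lra.
Import Order.TTheory GRing.Theory Num.Theory.
Local Open Scope ring_scope.

Lemma norm1_ge0 (R : numDomainType) d (v : 'rV[R]_d) : 0 <= norm1 v.
Proof. by rewrite /norm1; apply: sumr_ge0 => i _. Qed.

Lemma norm1_subrr (R : numDomainType) d (v : 'rV[R]_d) : norm1 (v - v) = 0.
Proof. by rewrite /norm1 big1 // => i _; rewrite subrr mxE normr0. Qed.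

Theorem lemma6 (R : realFieldType) (dz dy dx dk : nat)
  (fy : 'rV[R]_dz -> 'rV[R]_dx -> 'rV[R]_dk -> 'rV[R]_dy)
  (fz : 'rV[R]_dz -> 'rV[R]_dy -> 'rV[R]_dx -> 'rV[R]_dz)
  (My Mz : R)
  (hMy : 0 <= My) (hMz : 0 <= Mz)
  (hfy : lipschitz3 fy My) (hfz : lipschitz3 fz Mz)
  (hM : Mz * (My + 1) < 1)
  (n : nat) (eta : R) (z0 : 'rV[R]_dz)
  (x1 x2 : nat -> 'rV[R]_dx) (k : nat -> 'rV[R]_dk)
  (hx : forall t : nat, (1 <= t <= n)%N -> norm1 (x1 t - x2 t) <= eta) :
  forall t : nat, (1 <= t <= n)%N ->
    norm1 (chan_out fy fz z0 x1 k t - chan_out fy fz z0 x2 k t)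
      <= My * (2 - Mz * (My + 1)) / (1 - Mz * (My + 1)) * eta.
Proof.
move=> t ht.
have heta : 0 <= eta by apply: le_trans (hx t ht); apply: norm1_ge0.
set a := Mz * (My + 1).
have ha0 : 0 <= a by apply: mulr_ge0 => //; apply: addr_ge0.
have ha1 : 0 < 1 - a by rewrite subr_gt0.
set c := a * eta / (1 - a).
have hc : c * (1 - a) = a * eta by rewrite /c mulfVK // gt_eqF.
have hc0 : 0 <= c by apply: divr_ge0; [apply: mulr_ge0 | apply: ltW].
set z1 := chan_state fy fz z0 x1 k; set z2 := chan_state fy fz z0 x2 k.
have hy : forall i, (1 <= i <= n)%N ->
   norm1 (fy (z1 i.-1) (x1 i) (k i) - fy (z2 i.-1) (x2 i) (k i))
     <= My * (norm1 (z1 i.-1 - z2 i.-1) + eta).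
  move=> i hi; apply: le_trans (hfy _ _ _ _ _ _) _.
  rewrite norm1_subrr addr0; apply: ler_wpM2l => //.
  by rewrite lerD2l hx.
have hz : forall i, (i <= n)%N -> norm1 (z1 i - z2 i) <= c.
  elim=> [|i IH] hi.
    by rewrite /z1 /z2 /= norm1_subrr.
  have hi' : (1 <= i.+1 <= n)%N by rewrite hi.
  have IH' := IH (ltnW hi).
  have hyi := hy _ hi'; rewrite /= in hyi.
  rewrite /z1 /z2 /= -/z1 -/z2.
  apply: le_trans (hfz _ _ _ _ _ _) _.
  have hxi := hx _ hi'.
  have hD0 : 0 <= norm1 (z1 i - z2 i) by apply: norm1_ge0.
  set D := norm1 (z1 i - z2 i) in IH' hyi hD0 *.
  set E := norm1 (_ - _) in hyi *.
  set X := norm1 (x1 i.+1 - x2 i.+1) in hxi *.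
  have h1 : E <= My * (c + eta).
    by apply: le_trans hyi _; apply: ler_wpM2l => //; rewrite lerD2r.
  have h2 : D + E + X <= c + My * (c + eta) + eta by rewrite !lerD.
  apply: le_trans (ler_wpM2l hMz h2) _.
  have -> : Mz * (c + My * (c + eta) + eta) = a * (c + eta) by rewrite /a; ring.
  have : a * (c + eta) = c by rewrite mulrDr -hc; ring.
  by move=> ->.
rewrite /chan_out -/z1 -/z2.
apply: le_trans (hy _ ht) _.
have hD := hz t.-1 (leq_trans (leq_pred t) (andP ht).2).
have h3 : My * (norm1 (z1 t.-1 - z2 t.-1) + eta) <= My * (c + eta).
  by apply: ler_wpM2l => //; rewrite lerD2r.
apply: le_trans h3 _.
have -> : My * (2 - a) / (1 - a) * eta = My * (c + eta) + My * eta.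
  rewrite /c; field; by rewrite gt_eqF.
by rewrite lerDl mulr_ge0.
Qed.
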